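(* Let $K\ge1$, $f_0^-\equiv0$, and let $f_1^-,\dots,f_K^-:\mathcal{S}\times\mathcal{A}\to\mathbb{R}$ and $b_1,\dots,b_K:\mathcal{S}\times\mathcal{A}\to[0,\infty)$ satisfy, for all $k\in\{1,\dots,K\}$ and all $(s,a)$, $$f_k^-(s,a)\le(\mathcal{T}f_{k-1}^-)(s,a)\le f_k^-(s,a)+2b_k(s,a).$$ For each $k$ let $\pi_k$ be a deterministic greedy policy w.r.t. $f_k^-$, i.e. $\pi_k(s)\in\arg\max_a f_k^-(s,a)$. Then for every (stationary) policy $\pi_{\mathrm{cp}}$, $$J_K(\pi_{\mathrm{cp}})-J_K(\pi_{K:1})\le2\sum_{t=0}^{K-1}\gamma^t\,\mathbb{E}_{(s,a)\sim d_t^{\pi_{\mathrm{cp}}}}[b_{K-t}(s,a)].$$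
   Context: MDP $(\mathcal{S},\mathcal{A},P,R,\gamma,d_0)$ with finite $\mathcal{S},\mathcal{A}$, reward $R:\mathcal{S}\times\mathcal{A}\to[0,R_{\max}]$, $\gamma\in[0,1)$. The Bellman optimality operator is $(\mathcal{T}f)(s,a)=R(s,a)+\gamma\mathbb{E}_{s'\sim P(\cdot\mid s,a)}[\max_{a'}f(s',a')]$. The non-stationary policy $\pi_{K:1}$ generates $s_0\sim d_0$, $a_t\sim\pi_{K-t}(\cdot\mid s_t)$, $r_t=R(s_t,a_t)$, $s_{t+1}\sim P(\cdot\mid s_t,a_t)$ for $t=0,\dots,K-1$, and $J_K(\pi_{K:1})=\mathbb{E}[\sum_{t=0}^{K-1}\gamma^tr_t]$. For a stationary policy $\pi$, $J_K(\pi)$ is the same quantity with all $\pi_k=\pi$, and $d_t^\pi(s,a)=\Pr_\pi[s_t=s,a_t=a]$. *)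

(* Defs.v *)
From HB Require Import structures.
From mathcomp Require Import all_boot all_order all_algebra.
Set Implicit Arguments. Unset Strict Implicit. Unset Printing Implicit Defensive.
Import Order.TTheory GRing.Theory Num.Theory.
Local Open Scope ring_scope.

Section MDP.
Variables (R : realFieldType) (S A : finType).

Definition is_dist (T : finType) (p : T -> R) : Prop :=
  (forall x, 0 <= p x) /\ \sum_(x : T) p x = 1.

(* max_{a'} g a' over the nonempty finite action set (a0 : A is any action;
   the value does not depend on it) *)
Definition maxA (a0 : A) (g : A -> R) : R := \big[Num.max/g a0]_(a : A) g a.

Definition bellman (a0 : A) (r : S -> A -> R) (gamma : R) (P : S -> A -> S -> R)
  (f : S -> A -> R) (s : S) (a : A) : R :=
  r s a + gamma * \sum_(s' : S) P s a s' * maxA a0 (f s').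

(* A (possibly non-stationary) stochastic policy: pol t s a = Pr[a_t = a | s_t = s]. *)
Fixpoint state_dist (P : S -> A -> S -> R) (d0 : S -> R) (pol : nat -> S -> A -> R)
  (t : nat) : S -> R :=
  match t with
  | 0 => d0
  | t'.+1 => fun s' => \sum_(s : S) \sum_(a : A)
        state_dist P d0 pol t' s * pol t' s a * P s a s'
  end.

Definition sa_dist (P : S -> A -> S -> R) (d0 : S -> R) (pol : nat -> S -> A -> R) (t : nat) (s : S) (a : A) : R := state_dist P d0 pol t s * pol t s a.

Definition J (P : S -> A -> S -> R) (d0 : S -> R) (r : S -> A -> R) (gamma : R)
  (K : nat) (pol : nat -> S -> A -> R) : R :=
  \sum_(t < K) gamma ^+ t * \sum_(s : S) \sum_(a : A) sa_dist P d0 pol t s a * r s a.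

Definition stationary (pi : S -> A -> R) : nat -> S -> A -> R := fun _ => pi.

(* non-stationary deterministic policy pi_{K:1}: at time t play pi_{K-t} *)
Definition nonstat (K : nat) (pi : nat -> S -> A) : nat -> S -> A -> R :=
  fun t s a => if a == pi (K - t)%N s then 1 else 0.

End MDP.

(* Main.v *)
Require Import Defs.
From mathcomp Require Import all_boot all_order all_algebra.
From mathcomp Require Import zify ring lra.
Import Order.TTheory GRing.Theory Num.Theory.
Local Open Scope ring_scope.

Lemma maxA_ge (R : realFieldType) (A : finType) (a0 : A) (g : A -> R) a :
  g a <= Defs.maxA a0 g.
Proof. rewrite /Defs.maxA. exact: le_bigmax. Qed.

Lemma mix_le_max (R : realFieldType) (A : finType) (a0 : A) (p g : A -> R) :
  is_dist p -> \sum_a p a * g a <= Defs.maxA a0 g.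
Proof.
move=> [p0 p1].
apply: (@le_trans _ _ (\sum_a p a * Defs.maxA a0 g)).
  apply: ler_sum => a _; apply: ler_wpM2l => //; exact: maxA_ge.
by rewrite -mulr_suml p1 mul1r.
Qed.

Lemma sd_step (R : realFieldType) (S A : finType) (P : S -> A -> S -> R) d0 pol t
  (W : S -> R) :
  \sum_s state_dist P d0 pol t.+1 s * W s =
  \sum_s \sum_a sa_dist P d0 pol t s a * \sum_s' P s a s' * W s'.
Proof.
rewrite /=.
under eq_bigr do rewrite mulr_suml.
under eq_bigr do under eq_bigr do rewrite mulr_suml.
rewrite exchange_big /=; apply: eq_bigr => s _.
rewrite exchange_big /=; apply: eq_bigr => a _.
rewrite mulr_sumr; apply: eq_bigr => s' _.
by rewrite /sa_dist !mulrA.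
Qed.

Lemma sd_ge0 (R : realFieldType) (S A : finType) (P : S -> A -> S -> R) d0 pol t s :
  (forall s a s', 0 <= P s a s') -> (forall s, 0 <= d0 s) ->
  (forall t s a, 0 <= pol t s a) -> 0 <= state_dist P d0 pol t s.
Proof.
move=> HP Hd Hpol; elim: t s => [|t IH] s //=.
apply: sumr_ge0 => x _; apply: sumr_ge0 => a _.
by rewrite !mulr_ge0.
Qed.

Fixpoint Vn (R : realFieldType) (S A : finType) (P : S -> A -> S -> R) (r : S -> A -> R)
  (gamma : R) (pi : nat -> S -> A) (k : nat) (s : S) : R :=
  match k with
  | 0 => 0
  | k'.+1 => r s (pi k'.+1 s) + gamma * \sum_s' P s (pi k'.+1 s) s' * Vn R S A P r gamma pi k' s'
  end.

Arguments Vn [R S A] P r gamma pi k s.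
Lemma sum_ind (R : realFieldType) (A : finType) (c : A) (m : R) (h : A -> R) :
  \sum_a m * (if a == c then 1 else 0) * h a = m * h c.
Proof.
rewrite (bigD1 c) //= eqxx mulr1 big1 ?addr0 // => a /negbTE ->.
by rewrite mulr0 mul0r.
Qed.

Lemma J_ns (R : realFieldType) (S A : finType) (P : S -> A -> S -> R) d0 r gamma K pi :
  J P d0 r gamma K (@nonstat R S A K pi) = \sum_s d0 s * Vn P r gamma pi K s.
Proof.
set y := fun t => gamma ^+ t * \sum_s state_dist P d0 (nonstat R K pi) t s * Vn P r gamma pi (K - t) s.
have Hy : forall t, (t < K)%N -> gamma ^+ t * \sum_s \sum_a sa_dist P d0 (nonstat R K pi) t s a * r s a
     = (- y t.+1) - (- y t).
  move=> t Ht; rewrite opprK addrC /y.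
  have -> : (K - t = (K - t.+1).+1)%N by lia.
  rewrite sd_step /= exprS -mulrA [gamma * (gamma ^+ t * _)]mulrCA -mulrBr.
  congr (_ * _).
  have e : ((K - t.+1).+1 = K - t)%N by lia.
  rewrite e mulr_sumr -sumrB; apply: eq_bigr => s _.
  rewrite /sa_dist /nonstat !sum_ind; ring.
rewrite /J -(big_mkord xpredT (fun t => gamma ^+ t * \sum_s \sum_a sa_dist P d0 (nonstat R K pi) t s a * r s a)).
rewrite (@telescope_sumr_eq _ _ _ (fun t => - y t)); last 2 first.
- by [].
- by move=> t /andP [_ Ht]; exact: Hy.
rewrite /y subnn /= opprK subn0 expr0 mul1r.
have -> : \sum_s state_dist P d0 (nonstat R K pi) K s * 0 = 0 by rewrite big1 // => *; rewrite mulr0.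
by rewrite mulr0 oppr0 add0r.
Qed.

Lemma V_ge (R : realFieldType) (S A : finType) (a0 : A)
  (P : S -> A -> S -> R) (r : S -> A -> R) (gamma : R)
  (HP : forall s a, is_dist (P s a)) (Hg : 0 <= gamma) (K : nat)
  (f b : nat -> S -> A -> R)
  (Hf0 : forall s a, f 0%N s a = 0)
  (Hsand : forall k s a, (1 <= k <= K)%N ->
     f k s a <= bellman a0 r gamma P (f k.-1) s a <= f k s a + 2 * b k s a)
  (pi : nat -> S -> A)
  (Hgreedy : forall k s a, (1 <= k <= K)%N -> f k s a <= f k s (pi k s)) :
  forall k, (k <= K)%N -> forall s a, f k s a <= Vn P r gamma pi k s.
Proof.
elim=> [|k IH] Hk s a /=; first by rewrite Hf0.
have Hk1 : (1 <= k.+1 <= K)%N by lia.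
apply: le_trans (Hgreedy _ _ a Hk1) _.
have /andP [H1 _] := Hsand _ s (pi k.+1 s) Hk1.
apply: le_trans H1 _; rewrite /bellman /= lerD2l.
apply: ler_wpM2l => //; apply: ler_sum => s' _.
apply: ler_wpM2l; first by case: (HP s (pi k.+1 s)).
rewrite /Defs.maxA; apply/bigmax_leP; split => [|a' _]; apply: IH; lia.
Qed.

Theorem mainTheorem13 (R : realFieldType) (S A : finType) (a0 : A)
  (P : S -> A -> S -> R) (r : S -> A -> R) (Rmax gamma : R) (d0 : S -> R)
  (HP : forall s a, is_dist (P s a))
  (Hr : forall s a, 0 <= r s a <= Rmax)
  (Hgamma : 0 <= gamma < 1)
  (Hd0 : is_dist d0)
  (K : nat) (HK : (1 <= K)%N)
  (f b : nat -> S -> A -> R)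
  (Hf0 : forall s a, f 0%N s a = 0)
  (Hb : forall k s a, (1 <= k <= K)%N -> 0 <= b k s a)
  (Hsand : forall k s a, (1 <= k <= K)%N ->
     f k s a <= bellman a0 r gamma P (f k.-1) s a <= f k s a + 2 * b k s a)
  (pi : nat -> S -> A)
  (Hgreedy : forall k s a, (1 <= k <= K)%N -> f k s a <= f k s (pi k s))
  (pi_cp : S -> A -> R) (Hcp : forall s, is_dist (pi_cp s)) :
  J P d0 r gamma K (stationary pi_cp) - J P d0 r gamma K (@nonstat R S A K pi)
  <= 2 * \sum_(t < K) gamma ^+ t *
        \sum_(s : S) \sum_(a : A) sa_dist P d0 (stationary pi_cp) t s a * b (K - t)%N s a.
Proof.
have Hg : 0 <= gamma by case/andP: Hgamma.
have HP0 : forall s a s', 0 <= P s a s' by move=> s a s'; case: (HP s a).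
have Hmu : forall t s, 0 <= state_dist P d0 (stationary pi_cp) t s.
  move=> t s; apply: sd_ge0 => //; first by case: Hd0.
  by move=> t' s' a'; case: (Hcp s').
have Hd : forall t s a, 0 <= sa_dist P d0 (stationary pi_cp) t s a.
  by move=> t s a; apply: mulr_ge0 => //; case: (Hcp s).
set d := sa_dist P d0 (stationary pi_cp).
set x := fun t => gamma ^+ t * \sum_s \sum_a d t s a * f (K - t)%N s a.
have Hstep : forall t, (t < K)%N ->
   gamma ^+ t * (\sum_s \sum_a d t s a * r s a - 2 * \sum_s \sum_a d t s a * b (K - t)%N s a)
   <= (- x t.+1) - (- x t).
  move=> t Ht.
  have e : (K - t = (K - t.+1).+1)%N by lia.
  rewrite /x e; set k := (K - t.+1)%N.
  have Hk1 : (1 <= k.+1 <= K)%N by rewrite /k; lia.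
  set Rt := \sum_s \sum_a d t s a * r s a.
  set Bt := \sum_s \sum_a d t s a * b k.+1 s a.
  set F0 := \sum_s \sum_a d t s a * f k.+1 s a.
  set F1 := \sum_s \sum_a d t.+1 s a * f k s a.
  set M := \sum_s \sum_a d t s a * \sum_s' P s a s' * Defs.maxA a0 (f k s').
  have C1 : Rt + gamma * M - 2 * Bt <= F0.
    have -> : Rt + gamma * M - 2 * Bt =
       \sum_s \sum_a d t s a * (bellman a0 r gamma P (f k) s a - 2 * b k.+1 s a).
      rewrite /Rt /M /Bt !mulr_sumr -big_split -sumrB /=; apply: eq_bigr => s _.
      rewrite !mulr_sumr -big_split -sumrB /=; apply: eq_bigr => a _.
      rewrite /bellman; ring.
    apply: ler_sum => s _; apply: ler_sum => a _; apply: ler_wpM2l => //.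
    have /andP [_ H2] := Hsand _ s a Hk1.
    rewrite lerBlDr; exact: H2.
  have C2 : F1 <= M.
    have -> : F1 = \sum_s state_dist P d0 (stationary pi_cp) t.+1 s *
                 (\sum_a pi_cp s a * f k s a).
      by apply: eq_bigr => s _; rewrite mulr_sumr; apply: eq_bigr => a _;
        rewrite /d /sa_dist /stationary mulrA.
    rewrite sd_step; apply: ler_sum => s _; apply: ler_sum => a _.
    apply: ler_wpM2l => //; apply: ler_sum => s' _; apply: ler_wpM2l => //.
    exact: mix_le_max.
  have C3 : gamma * F1 <= gamma * M by exact: ler_wpM2l.
  have C4 : Rt - 2 * Bt <= F0 - gamma * F1 by lra.
  have Hgt : 0 <= gamma ^+ t by exact: exprn_ge0.
  have -> : - (gamma ^+ t.+1 * F1) - - (gamma ^+ t * F0) = gamma ^+ t * (F0 - gamma * F1).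
    rewrite exprS; ring.
  exact: ler_wpM2l.
have Hsum : \sum_(t < K) gamma ^+ t * (\sum_s \sum_a d t s a * r s a
        - 2 * \sum_s \sum_a d t s a * b (K - t)%N s a) <= x 0%N - x K.
  rewrite -(big_mkord xpredT (fun t => gamma ^+ t * (\sum_s \sum_a d t s a * r s a
        - 2 * \sum_s \sum_a d t s a * b (K - t)%N s a))).
  apply: (@le_trans _ _ (\sum_(0 <= t < K) ((- x t.+1) - (- x t)))).
    rewrite big_nat_cond [X in _ <= X]big_nat_cond.
    by apply: ler_sum => t /andP [/andP [_ Ht] _]; exact: Hstep.
  rewrite telescope_sumr //; lra.
have HxK : x K = 0.
  rewrite /x subnn big1 ?mulr0 // => s _; rewrite big1 // => a _.
  by rewrite Hf0 mulr0.
have Hx0 : x 0%N <= \sum_s d0 s * Vn P r gamma pi K s.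
  rewrite /x expr0 mul1r subn0; apply: ler_sum => s _.
  rewrite /d /sa_dist /= /stationary.
  apply: (@le_trans _ _ (\sum_a d0 s * pi_cp s a * Vn P r gamma pi K s)).
    apply: ler_sum => a _; apply: ler_wpM2l.
      by apply: mulr_ge0; [case: Hd0 | case: (Hcp s)].
    exact: (@V_ge _ _ _ a0 P r gamma HP Hg K f b Hf0 Hsand pi Hgreedy K (leqnn K)).
  rewrite -mulr_suml -mulr_sumr; case: (Hcp s) => _ ->; by rewrite mulr1.
rewrite J_ns.
have E : J P d0 r gamma K (stationary pi_cp) - 2 * \sum_(t < K) gamma ^+ t *
        \sum_s \sum_a d t s a * b (K - t)%N s a =
   \sum_(t < K) gamma ^+ t * (\sum_s \sum_a d t s a * r s a
        - 2 * \sum_s \sum_a d t s a * b (K - t)%N s a).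
  rewrite /J mulr_sumr -sumrB; apply: eq_bigr => t _; rewrite -/d; ring.
rewrite -/d; lra.
Qed.
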